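(* Let $X,Y$ be non-empty subsets of $A^+$. The following are equivalent: (i) $XY$ is a strong alt-induced code; (ii) $(X,Y)$ is a strong alternative code; (iii) $X$ is a prefix code, $Y$ is a suffix code, and $XY$ is a code.
   Context: $A$ is a finite alphabet, $A^*$ the set of words, $A^+$ the non-empty words, $XY=\{xy:x\in X,y\in Y\}$. For $X,Z\subseteq A^*$: $X^{-1}Z=\{u\in A^*: xu\in Z \text{ for some } x\in X\}$ and $ZY^{-1}=\{u\in A^*: uy\in Z\text{ for some } y\in Y\}$. A code is a subset of $A^+$ in which every word has at most one factorization into its elements. A prefix (suffix) code is a subset of $A^+$ in which no word is a proper prefix (suffix) of another. For non-empty $X,Y\subseteq A^+$, $(X,Y)$ is an alternative code if no word of $A^+$ admits two different similar alternative factorizations on $(X,Y)$ (factorizations $u_1\cdots u_n$, $n\ge2$, $u_i\in X\cup Y$, alternating between $X$ and $Y$; similar = beginning in the same set and ending in the same set); equivalently, $XY$ is a code and each element of $XY$ has exactly one factorization $xy$ with $x\in X,y\in Y$. An alternative code $(X,Y)$ is a strong alternative code if $X^{-1}(XY)\subseteq Y$ and $(XY)Y^{-1}\subseteq X$. A set $Z$ is a strong alt-induced code if $Z=XY$ for some strong alternative code $(X,Y)$. In (i), ''$XY$ is a strong alt-induced code'' is understood as in the paper, namely via this particular pair $(X,Y)$: $XY$ is a strong alt-induced code generated by $(X,Y)$. *)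

(* Defs.v *)
(* Words over a finite alphabet A are 'seq A';
   (possibly infinite) sets of words are Prop-valued predicates. *)
From mathcomp Require Import all_boot.
Set Implicit Arguments. Unset Strict Implicit. Unset Printing Implicit Defensive.

Definition lang (A : finType) := seq A -> Prop.

Section Words.
Variable A : finType.
Implicit Types X Y Z : lang A.

Definition sub_plus X := forall x, X x -> x <> [::].

Definition nonempty_lang X := exists x, X x.

Definition lconcat X Y : lang A :=
  fun w => exists x y, [/\ X x, Y y & w = x ++ y].

Definition is_code Z :=
  sub_plus Z /\
  forall s t : seq (seq A),
    (forall u, u \in s -> Z u) -> (forall u, u \in t -> Z u) ->
    flatten s = flatten t -> s = t.

Definition prefix_code X :=
  sub_plus X /\ forall x y, X x -> X y -> prefix x y -> x = y.
Definition suffix_code X :=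
  sub_plus X /\ forall x y, X x -> X y -> suffix x y -> x = y.

Fixpoint alt (P Q : lang A) (s : seq (seq A)) : Prop :=
  match s with
  | [::] => True
  | u :: s' => P u /\ alt Q P s'
  end.

(* no two different similar alternative factorizations beginning in P
   (similar: same starting set P, and same ending set, i.e. same parity
   of the number of factors) *)
Definition alt_unique (P Q : lang A) :=
  forall s t : seq (seq A),
    2 <= size s -> 2 <= size t ->
    alt P Q s -> alt P Q t ->
    odd (size s) = odd (size t) ->
    flatten s = flatten t -> s = t.

Definition alt_code X Y :=
  [/\ nonempty_lang X /\ nonempty_lang Y, sub_plus X, sub_plus Y,
      alt_unique X Y & alt_unique Y X].

(* X^{-1}(XY) subset of Y, and (XY)Y^{-1} subset of X *)
Definition strong_alt_code X Y :=
  [/\ alt_code X Y,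
      (forall x u, X x -> lconcat X Y (x ++ u) -> Y u) &
      (forall u y, Y y -> lconcat X Y (u ++ y) -> X u)].

Definition strong_alt_induced_by Z X Y :=
  strong_alt_code X Y /\ forall w, Z w <-> lconcat X Y w.

End Words.

(* Main.v *)
Require Import Defs.
From mathcomp Require Import all_boot.
Set Implicit Arguments. Unset Strict Implicit.

Section Aux.
Variable A : finType.
Implicit Types X Y : lang A.

Fixpoint pairs (f : seq (seq A)) : seq (seq A) :=
  match f with a :: b :: r => (a ++ b) :: pairs r | _ => [::] end.

Lemma pair_ind (T : Type) (P : seq T -> Prop) :
  P [::] -> (forall a, P [:: a]) -> (forall a b r, P r -> P (a :: b :: r)) ->
  forall s, P s.
Proof.
move=> H0 H1 H2 s; have [n] := ubnP (size s); elim: n s => // n IH.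
case=> [|a [|b r]] //= Hs; apply: H2; apply: IH; rewrite /= in Hs.
exact: ltnW Hs.
Qed.

Lemma catLK (x u v : seq A) : x ++ u = x ++ v -> u = v.
Proof. by move=> E; rewrite -(drop_size_cat u (erefl (size x))) E drop_size_cat. Qed.

Lemma catRK (u v y : seq A) : u ++ y = v ++ y -> u = v.
Proof.
move=> E; have Hs : size u = size v.
  by have := congr1 size E; rewrite !size_cat => /eqP; rewrite eqn_add2r => /eqP.
by rewrite -(take_size_cat y (erefl (size u))) E take_size_cat.
Qed.

Lemma cmp_prefix (x y x' y' : seq A) : x ++ y = x' ++ y' ->
  prefix x x' \/ prefix x' x.
Proof.
move=> E; case: (leqP (size x) (size x')) => H.
  left; rewrite prefixE.
  by rewrite -(takel_cat y' H) -E take_size_cat.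
right; rewrite prefixE.
by rewrite -(takel_cat y (ltnW H)) E take_size_cat.
Qed.

Lemma cmp_suffix (x y x' y' : seq A) : x ++ y = x' ++ y' ->
  suffix y y' \/ suffix y' y.
Proof.
move=> E; rewrite /suffix; apply: (@cmp_prefix _ (rev x) _ (rev x')).
by rewrite -!rev_cat E.
Qed.

Lemma alt_rcons (P Q : lang A) s y :
  alt P Q s -> (if odd (size s) then Q y else P y) -> alt P Q (rcons s y).
Proof.
elim: s P Q => [|a s IH] P Q /=; first by [].
by move=> [Ha Hs] Hy; split=> //; apply: IH => //; case: (odd (size s)) Hy.
Qed.

Lemma pairs_in X Y f : alt X Y f -> forall u, u \in pairs f -> lconcat X Y u.
Proof.
elim/pair_ind: f => // a b r IH /= [Ha [Hb Hr]] u.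
rewrite inE => /orP [/eqP -> | Hu]; last exact: IH.
by exists a, b.
Qed.

Lemma flatten_pairs f : ~~ odd (size f) -> flatten (pairs f) = flatten f.
Proof.
elim/pair_ind: f => // a b r IH /=; rewrite negbK => H.
by rewrite IH // catA.
Qed.

Lemma flatten_nil X Y f : sub_plus X -> alt X Y f -> flatten f = [::] -> f = [::].
Proof.
move=> sX; case: f => // c f /= [Hc _]; have := sX _ Hc.
by case: c Hc.
Qed.

Lemma pairs_inj X Y f g : prefix_code X ->
  alt X Y f -> alt X Y g -> ~~ odd (size f) -> ~~ odd (size g) ->
  pairs f = pairs g -> f = g.
Proof.
move=> [sX pX]; elim/pair_ind: f g => [|a|a b r IH] g.
- by case: g => [|c [|d g]].
- by [].
- case: g => [|c [|d g]] //= [Ha [Hb Hr]] [Hc [Hd Hg]]; rewrite !negbK => Or Og [E Ep].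
  have Eac : a = c.
    by case: (cmp_prefix E) => H; [apply: pX | apply/esym; apply: pX].
  subst c; have := catLK E => ->.
  by rewrite (IH g).
Qed.

Lemma even_uniq X Y f g : prefix_code X -> is_code (lconcat X Y) ->
  alt X Y f -> alt X Y g -> ~~ odd (size f) -> ~~ odd (size g) ->
  flatten f = flatten g -> f = g.
Proof.
move=> pX [_ cXY] Hf Hg Of Og E.
apply: (pairs_inj pX Hf Hg Of Og); apply: cXY; try exact: pairs_in.
by rewrite !flatten_pairs.
Qed.

Lemma all_uniq X Y f g : nonempty_lang Y -> prefix_code X -> is_code (lconcat X Y) ->
  alt X Y f -> alt X Y g -> odd (size f) = odd (size g) ->
  flatten f = flatten g -> f = g.
Proof.
move=> [y Hy] pX cXY Hf Hg O E.
case Of: (odd (size f)).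
- apply: (@rcons_injl _ y).
  apply: (even_uniq pX cXY).
  + by apply: alt_rcons; rewrite ?Of.
  + by apply: alt_rcons; rewrite -?O ?Of.
  + by rewrite size_rcons /= Of.
  + by rewrite size_rcons /= -O Of.
  + by rewrite !flatten_rcons E.
- by apply: (even_uniq pX cXY) => //; rewrite -?O Of.
Qed.

Lemma expand X Y s : (forall u, u \in s -> lconcat X Y u) ->
  exists f, [/\ alt X Y f, ~~ odd (size f), pairs f = s & flatten f = flatten s].
Proof.
elim: s => [|w s IH] H; first by exists [::].
have [f [Hf Of Pf Ff]] : exists f, [/\ alt X Y f, ~~ odd (size f), pairs f = s & flatten f = flatten s].
  by apply: IH => u Hu; apply: H; rewrite inE Hu orbT.
have [x [y [Hx Hy Ew]]] : lconcat X Y w by apply: H; rewrite inE eqxx.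
exists [:: x, y & f]; split => //=; first by rewrite negbK.
- by rewrite Pf Ew.
- by rewrite Ff Ew catA.
Qed.

End Aux.

Theorem theoremT (A : finType) (X Y : lang A) :
  nonempty_lang X -> nonempty_lang Y -> sub_plus X -> sub_plus Y ->
  (strong_alt_induced_by (lconcat X Y) X Y <-> strong_alt_code X Y) /\
  (strong_alt_code X Y <->
     [/\ prefix_code X, suffix_code Y & is_code (lconcat X Y)]).
Proof.
move=> neX neY sX sY; split.
  by split; [case | move=> H; split].
split.
- move=> [[_ _ _ auXY auYX] C1 C2]; split.
  + split=> // x x' Hx Hx' /prefixP [u Eu].
    have [y Hy] := neY.
    have Huy : Y (u ++ y).
      apply: (C1 x) => //; exists x', y; split=> //; by rewrite Eu catA.
    have : [:: x; u ++ y] = [:: x'; y].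
      by apply: auXY => //=; rewrite Eu !cats0 catA.
    by case.
  + split=> // y y' Hy Hy' /suffixP [u Eu].
    have [x Hx] := neX.
    have Hxu : X (x ++ u).
      apply: (C2 _ y) => //; exists x, y'; split=> //; by rewrite Eu catA.
    have : [:: x ++ u; y] = [:: x; y'].
      by apply: auXY => //=; rewrite Eu !cats0 catA.
    by case.
  + split.
      move=> w [x [y [Hx _ ->]]]; have := sX _ Hx; by case: x Hx.
    move=> s t Hs Ht E.
    have [f [Hf Of Pf Ff]] := expand Hs.
    have [g [Hg Og Pg Fg]] := expand Ht.
    rewrite -Pf -Pg; congr pairs.
    case: f Hf Of Pf Ff => [|a [|b f]] Hf Of Pf Ff //.
      by rewrite (flatten_nil sX Hg) // Fg -E -Ff.
    case: g Hg Og Pg Fg => [|c [|d g]] Hg Og Pg Fg //.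
      by have := flatten_nil sX Hf; rewrite Ff E -Fg => /(_ erefl).
    apply: auXY => //=; first by rewrite /= !negbK in Of Og; rewrite (negbTE Of) (negbTE Og).
    by rewrite -Ff -Fg in E; exact: E.
- move=> [pX sufY cXY]; have [_ pXX] := pX; have [_ sYY] := sufY.
  split; first split => //.
  + move=> s t _ _ Hs Ht O E; exact: (all_uniq neY pX cXY).
  + move=> s t _ _ Hs Ht O E.
    have [x Hx] := neX.
    have : x :: s = x :: t.
      by apply: (all_uniq neY pX cXY) => //=; rewrite ?O ?E.
    by case.
  + move=> x u Hx [x' [y' [Hx' Hy' E]]].
    have Exx : x = x'.
      by case: (cmp_prefix E) => H; [apply: pXX | apply/esym; apply: pXX].
    by subst x'; rewrite (catLK E).
  + move=> u y Hy [x' [y' [Hx' Hy' E]]].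
    have Eyy : y = y'.
      by case: (cmp_suffix E) => H; [apply: sYY | apply/esym; apply: sYY].
    by subst y'; rewrite (catRK E).
Qed.
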